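(* Let $(A,S)$ be an SP, $k\in Q_0$ with no oriented 2-cycle of $Q$ incident to $k$ and with no cyclic path of $S$ starting or ending at $k$, and let $M$ be a (finite-dimensional, nilpotent) representation of $(A,S)$. Then the map $\gamma:M_{\rm out}\to M_{\rm in}$ is $F_k$-linear and satisfies $\gamma\beta=0$ and $\alpha\gamma=0$.
   Context: Standing setup: strongly primitive weighted quiver $(Q,\mathbf d)$; $d=\operatorname{lcm}(d_i)$; $F$ with a primitive $d$-th root of unity; $E/F$ cyclic Galois of degree $d$; $F_i$ the degree-$d_i$ subextension with eigenbasis $\mathcal B_i$ (from a fixed eigenbasis of $E/F$; $\mathcal B_k\ni 1$); arrow span $A$, complete path algebra, paths $\omega_0a_1\omega_1\cdots a_\ell\omega_\ell$, potentials, cyclic derivatives $\partial_a$ as in the paper; an SP is a pair $(A,S)$ with no two distinct terms of $S$ cyclically equivalent. A representation $M$ of $(A,S)$: finite-dimensional $F_i$-vector spaces $M_i$ ($i\in Q_0$) and $F$-linear maps $a_M:M_{t(a)}\to M_{h(a)}$ ($a\in Q_1$) such that all sufficiently long paths act by zero and all $\partial_a(S)$ act by zero (equivalently a finite-dimensional $\mathcal P(A,S)$-module). Let $a_1,\dots,a_p$ be the arrows with head $k$ and $b_1,\dots,b_q$ those with tail $k$; $M_{\rm in}=\bigoplus_s F_k\otimes_FM_{t(a_s)}$, $M_{\rm out}=\bigoplus_rF_k\otimes_FM_{h(b_r)}$. $\alpha:M_{\rm in}\to M_k$ has components $x\otimes m\mapsto x\,a_{s,M}(m)$; $\beta:M_k\to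 M_{\rm out}$ has components $m\mapsto\sum_{\omega\in\mathcal B_k}\omega^{-1}\otimes b_{r,M}(\omega m)$. For arrows $a,b$ with $h(a)=k=t(b)$ and $\omega\in\mathcal B_k$, $\partial_{b\omega a}$ is the continuous $F$-linear map on potentials with $\partial_{b\omega a}(c_1\omega_1c_2\cdots c_\ell\omega_\ell)=\sum_{t=1}^\ell\delta_{b\omega a,\,c_t\omega_tc_{t+1}}\,\omega_{t+1}c_{t+2}\cdots c_\ell\omega_\ell c_1\cdots c_{t-1}\omega_{t-1}$ (indices cyclic). $\gamma$ has components $\gamma_{sr}:F_k\otimes_FM_{h(b_r)}\to F_k\otimes_FM_{t(a_s)}$, $x\otimes m\mapsto\sum_{\omega\in\mathcal B_k}x\omega\otimes\partial_{b_r\omega a_s}(S)(m)$. *)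

(* Defs.v *)
From HB Require Import structures.
From mathcomp Require Import all_boot all_order all_algebra all_fingroup all_field.
From mathcomp Require Import cyclic.
Set Implicit Arguments. Unset Strict Implicit. Unset Printing Implicit Defensive.
Import GRing.Theory.
Local Open Scope ring_scope.

(* E/F cyclic Galois of degree d, F_i = Fv i the degree-(wt i) subextension,  *)
(* u = the fixed eigenbasis of E/F (a d.-tuple), B_i = elements of u in F_i.  *)
(* A path  w_0 c_1 w_1 ... c_m w_m  (w_t = u_{j_t}) is encoded as the pair     *)
(* (j_0, [:: (c_1, j_1); ...; (c_m, j_m)]); c_1 is applied LAST (composition  *)
(* order), so hd (c_{t+1}) = tl (c_t).  A cyclic path c_1 w_1 ... c_l w_l      *)
(* (the normal form of the terms of a potential) is encoded as the sequence   *)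
(* [:: (c_1, j_1); ...; (c_l, j_l)].                                          *)

Section Species.
Variables (F : fieldType) (E : splittingFieldType F).
Variables (Q0 Q1 : finType) (tl hd : Q1 -> Q0).
Variables (d : nat) (u : d.-tuple E) (Fv : Q0 -> {subfield E}).

Definition om (j : 'I_d) : E := tnth u j.

Definition arr := (Q1 * 'I_d)%type.

Definition Bv (i : Q0) : seq E := [seq om j | j <- enum 'I_d & om j \in Fv i].

Definition headv (v : Q0) (p : seq arr) : Q0 := if p is (c, _) :: _ then hd c else v.

Fixpoint vseq (v : Q0) (p : seq arr) : bool :=
  match p with
  | [::] => true
  | (c, j) :: p' => [&& om j \in Fv (tl c), headv v p' == tl c & vseq v p']
  end.

Definition vpath (v : Q0) (j0 : 'I_d) (p : seq arr) : bool :=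
  (om j0 \in Fv (headv v p)) && vseq v p.

(* c_1 w_1 ... c_l w_l is a cyclic path (l >= 1, hd c_1 = tl c_l) *)
Definition cyc_valid (P : seq arr) : bool :=
  if P is (c, _) :: _ then vseq (hd c) P else false.

Definition cyc_equiv (P P' : seq arr) : Prop := exists n, P' = rot n P.

(* A potential: a (possibly infinite) F-linear combination of cyclic paths,
   S P = coefficient of the cyclic path P.  (A,S) is an SP iff S is supported
   on cyclic paths and no two distinct terms are cyclically equivalent. *)
Definition is_SP (S : seq arr -> F) : Prop :=
  (forall P, S P != 0 -> cyc_valid P) /\
  (forall P P', S P != 0 -> S P' != 0 -> cyc_equiv P P' -> P = P').

(* cyclic derivative d_a of a cyclic path: the list of the paths
   w_t c_{t+1} ... c_l w_l c_1 ... c_{t-1} w_{t-1}, for all t with c_t = a *)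
Definition deriv1 (a : Q1) (P : seq arr) : seq ('I_d * seq arr) :=
  flatten [seq (if rot t P is (c, j) :: rest then
                  (if c == a then [:: (j, rest)] else [::]) else [::])
          | t <- iota 0 (size P)].

(* d_{b w a} of a cyclic path (w = u_j): the list of the paths
   w_{t+1} c_{t+2} ... c_{t-1} w_{t-1} for all t with c_t w_t c_{t+1} = b w a *)
Definition deriv2 (b : Q1) (j : 'I_d) (a : Q1) (P : seq arr) : seq ('I_d * seq arr) :=
  flatten [seq (if rot t P is (c1, j1) :: (c2, j2) :: rest then
                  (if [&& c1 == b, j1 == j & c2 == a] then [:: (j2, rest)] else [::])
                else [::])
          | t <- iota 0 (size P)].

(* ---- E (x)_F V, encoded by coordinates w.r.t. the F-basis u of E ---- *)
Definition Tn (V : lmodType F) := {ffun 'I_d -> V}.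

Definition tens {V : lmodType F} (y : E) (m : V) : Tn V := [ffun l => coord u l y *: m].

(* the action of x in E on E (x)_F V : x . (sum_j u_j (x) T_j) = sum_j (x u_j) (x) T_j *)
Definition tscale {V : lmodType F} (x : E) (T : Tn V) : Tn V :=
  \sum_(j < d) tens (x * om j) (T j).

Definition in_tens {V : lmodType F} (k : Q0) (T : Tn V) : Prop :=
  forall l, om l \notin Fv k -> T l = 0.

Variables (M : Q0 -> vectType F) (act : forall i, E -> 'End(M i))
          (am : forall a : Q1, 'Hom(M (tl a), M (hd a))).

Definition is_Fmodule : Prop :=
  forall i, act i 1 = \1%VF /\
    (forall c : F, act i (c%:A) = c *: \1%VF) /\
    {in Fv i &, forall x y, act i (x + y) = act i x + act i y} /\
    {in Fv i &, forall x y, act i (x * y) = (act i x \o act i y)%VF}.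

Definition tot := forall i, M i.

Definition inj (v : Q0) (m : M v) : tot :=
  fun i => if v =P i is ReflectT e then ecast i (M i) e m else 0.
Arguments inj v m : clear implicits.


Definition wmul (j : 'I_d) (x : tot) : tot := fun i => act i (om j) (x i).

Definition aop (c : Q1) (x : tot) : tot :=
  fun i => if hd c =P i is ReflectT e then ecast i (M i) e (am c (x (tl c))) else 0.

Fixpoint pop (j0 : 'I_d) (p : seq arr) (x : tot) : tot :=
  match p with
  | [::] => wmul j0 x
  | (c, j) :: p' => wmul j0 (aop c (pop j p' x))
  end.

Definition pact (v w : Q0) (j0 : 'I_d) (p : seq arr) (m : M v) : M w :=
  pop j0 p (inj v m) w.
Arguments pact v w j0 p m : clear implicits.


Definition nilpotent (N : nat) : Prop :=
  forall v w j0 p (m : M v), vpath v j0 p -> (N <= size p)%N -> pact v w j0 p m = 0.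

Variables (S : seq arr -> F) (N : nat).

(* action, on a representation where paths of length >= N vanish, of the
   (infinite) sum  sum_P S(P) f(P),  f(P) a list of paths obtained from the
   cyclic path P by a derivative; terms from cyclic paths of length > N+1
   have length >= N and act by zero, so the truncated sum is the action *)
Definition sact (v w : Q0) (f : seq arr -> seq ('I_d * seq arr)) (m : M v) : M w :=
  \sum_(n < N.+2) \sum_(P : n.-tuple arr) S P *: \sum_(q <- f P) pact v w q.1 q.2 m.
Arguments sact v w f m : clear implicits.


Definition dact (a : Q1) (m : M (hd a)) : M (tl a) := sact (hd a) (tl a) (deriv1 a) m.
Arguments dact a m : clear implicits.


Definition dact2 (b : Q1) (j : 'I_d) (a : Q1) (m : M (hd b)) : M (tl a) :=
  sact (hd b) (tl a) (deriv2 b j a) m.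
Arguments dact2 b j a m : clear implicits.


Definition jacobian : Prop := forall a (m : M (hd a)), dact a m = 0.

(* ---- the maps alpha, beta, gamma at the vertex k ----
   M_in  = (+)_{a : hd a = k} F_k (x) M_{tl a}   : families  forall a, Tn (M (tl a))
   M_out = (+)_{b : tl b = k} F_k (x) M_{hd b}   : families  forall b, Tn (M (hd b))
   (components for arrows not incident to k as required are ignored). *)
Variable k : Q0.

Definition in_Mout (T : forall b : Q1, Tn (M (hd b))) : Prop :=
  forall b, tl b = k -> in_tens k (T b).

Definition in_Min (T : forall a : Q1, Tn (M (tl a))) : Prop :=
  forall a, hd a = k -> in_tens k (T a).

(* alpha(x (x) m) = x a_s(m) *)
Definition alpha (T : forall a : Q1, Tn (M (tl a))) : M k :=
  \sum_(a | hd a == k) \sum_(l < d) act k (om l) (aop a (inj (tl a) (T a l)) k).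

Definition beta (m : M k) (b : Q1) : Tn (M (hd b)) :=
  \sum_(j | om j \in Fv k) tens (om j)^-1 (aop b (inj k (act k (om j) m)) (hd b)).

(* gamma_{sr}(x (x) m) = sum_{w in B_k} x w (x) d_{b_r w a_s}(S)(m),
   extended F-linearly via T = sum_l u_l (x) T_l *)
Definition gamma (T : forall b : Q1, Tn (M (hd b))) (a : Q1) : Tn (M (tl a)) :=
  \sum_(b | tl b == k) \sum_(l < d) \sum_(j | om j \in Fv k)
     tens (om l * om j) (dact2 b j a (T b l)).

End Species.

Arguments Bv {F E Q0 d} u Fv i.
Arguments is_SP {F E Q0 Q1} tl hd {d} u Fv S.
Arguments is_Fmodule {F E Q0} Fv {M} act.
Arguments nilpotent {F E Q0 Q1} tl hd {d} u Fv {M} act am N.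
Arguments jacobian {F E Q0 Q1} tl hd {d} u {M} act am S N.
Arguments in_Mout {F E Q0 Q1} tl hd {d} u Fv {M} k T.
Arguments gamma {F E Q0 Q1} tl hd {d} u Fv {M} act am S N k T a.
Arguments beta {F E Q0 Q1} tl hd {d} u Fv {M} act am k m b.
Arguments alpha {F E Q0 Q1} tl hd {d} u {M} act am k T.
Arguments tscale {F E d} u {V} x T.

(* Main.v *)
Require Import Defs.
From HB Require Import structures.
From mathcomp Require Import all_boot all_order all_algebra all_fingroup all_field.
From mathcomp Require Import cyclic.
Set Implicit Arguments. Unset Strict Implicit. Unset Printing Implicit Defensive.
Import GRing.Theory.
Local Open Scope ring_scope.

Definition mkLin (F : fieldType) (V W : lmodType F) (f : V -> W) (hf : linear f) : {linear V -> W} :=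
  HB.pack f (GRing.isLinear.Build F V W *:%R f hf).

Section LinH.
Variables (F : fieldType) (V W : lmodType F) (f : V -> W) (hf : linear f).
Lemma linS I (r : seq I) (P : pred I) g :
  f (\sum_(i <- r | P i) g i) = \sum_(i <- r | P i) f (g i).
Proof. by rewrite (_ : f _ = @mkLin _ _ _ f hf (\sum_(i <- r | P i) g i)) // linear_sum. Qed.
Lemma linZ a x : f (a *: x) = a *: f x.
Proof. by rewrite (_ : f _ = @mkLin _ _ _ f hf (a *: x)) // linearZ. Qed.
Lemma linD x y : f (x + y) = f x + f y.
Proof. by rewrite (_ : f _ = @mkLin _ _ _ f hf (x + y)) // linearD. Qed.
Lemma lin0 : f 0 = 0.
Proof. by rewrite (_ : f _ = @mkLin _ _ _ f hf 0) // linear0. Qed.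
End LinH.

Section Basics.
Variables (F : fieldType) (E : splittingFieldType F).
Variables (Q0 Q1 : finType) (tl hd : Q1 -> Q0).
Variables (d : nat) (u : d.-tuple E).
Variables (M : Q0 -> vectType F) (act : forall i, E -> 'End(M i))
          (am : forall a : Q1, 'Hom(M (tl a), M (hd a))).

Definition tr (v i : Q0) (z : M v) : M i :=
  if v =P i is ReflectT e then ecast i (M i) e z else 0.

Lemma injE v (m : M v) i : inj m i = tr i m. Proof. by []. Qed.
Lemma aopE c x i : aop am c x i = tr i (am c (x (tl c))). Proof. by []. Qed.
Lemma wmulE j x i : wmul u act j x i = act i (om u j) (x i). Proof. by []. Qed.

Lemma trvv v (z : M v) : tr v z = z.
Proof. by rewrite /tr; case: eqP => // e; rewrite (eq_axiomK e). Qed.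

Lemma tr_lin v i : linear (@tr v i).
Proof.
move=> a x y; rewrite /tr; case: eqP => [e|_]; last by rewrite scaler0 addr0.
by subst i.
Qed.

HB.instance Definition _ v i := GRing.isLinear.Build F (M v) (M i) *:%R (@tr v i) (@tr_lin v i).

Lemma tr_act v i y (z : M v) : tr i (act v y z) = act i y (tr i z).
Proof.
rewrite /tr; case: eqP => [e|_]; last by rewrite linear0.
by subst i.
Qed.

Lemma trtr v w i (z : M v) : v = w -> tr i (tr w z) = tr i z.
Proof. by move=> e; subst w; rewrite trvv. Qed.

Lemma pop_ext j p x y : (forall i, x i = y i) -> forall i, pop u act am j p x i = pop u act am j p y i.
Proof.
elim: p j => [|[c j'] p IH] j Hxy i /=; first by rewrite !wmulE Hxy.
by rewrite !wmulE !aopE IH.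
Qed.

Lemma pop_lin j p a x y z : (forall i, z i = a *: x i + y i) ->
  forall i, pop u act am j p z i = a *: pop u act am j p x i + pop u act am j p y i.
Proof.
elim: p j => [|[c j'] p IH] j Hz i /=; first by rewrite !wmulE Hz linearP.
by rewrite !wmulE !aopE IH // linearP tr_lin linearP.
Qed.

Lemma pop_rcons j0 p c j x :
  pop u act am j0 (rcons p (c, j)) x = pop u act am j0 p (aop am c (wmul u act j x)).
Proof. by elim: p j0 => [|[c' j'] p IH] j0 //=; rewrite IH. Qed.


Variables (S : seq (arr Q1 d) -> F) (N : nat).

Lemma pact_lin v w j p : linear (@pact _ _ _ _ tl hd _ u M act am v w j p).
Proof. move=> a x y; rewrite /pact; apply: pop_lin => i; exact: tr_lin. Qed.

Lemma sact_lin v w f : linear (@sact _ _ _ _ tl hd _ u M act am S N v w f).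
Proof.
move=> a x y; rewrite /sact scaler_sumr -big_split; apply: eq_bigr => n _.
rewrite scaler_sumr -big_split; apply: eq_bigr => P _.
rewrite (eq_bigr _ (fun q _ => @pact_lin v w q.1 q.2 a x y)) big_split -scaler_sumr /=.
by rewrite scalerDr !scalerA mulrC.
Qed.

Lemma dact2_lin b j a : linear (@dact2 _ _ _ _ tl hd _ u M act am S N b j a).
Proof. exact: sact_lin. Qed.

Lemma tens_linm (V : lmodType F) (y : E) : linear (@tens _ _ _ u V y).
Proof. by move=> a x z; apply/ffunP => l; rewrite !ffunE scalerDr !scalerA mulrC. Qed.

Lemma tens_liny (V : lmodType F) (z : E) (m : V) : linear (fun y => @tens _ _ _ u V (y * z) m).
Proof.
move=> a x y; apply/ffunP => l; rewrite !ffunE mulrDl -scalerAl linearP /=.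
by rewrite scalerDl scalerA.
Qed.

End Basics.

Section RotLemmas.
Variable X : Type.
Lemma rot_nth (P : seq X) t x0 : (t < size P)%N -> rot t P = nth x0 P t :: (drop t.+1 P ++ take t P).
Proof. by move=> Ht; rewrite /rot (drop_nth x0 Ht). Qed.
Lemma rot_nth2 (P : seq X) t x0 : (t.+1 < size P)%N ->
  rot t P = nth x0 P t :: nth x0 P t.+1 :: (drop t.+2 P ++ take t P).
Proof. by move=> Ht; rewrite (rot_nth x0 (ltnW Ht)) (drop_nth x0 Ht). Qed.
Lemma rot_succ (P : seq X) t x0 : (t.+1 < size P)%N ->
  rot t.+1 P = nth x0 P t.+1 :: rcons (drop t.+2 P ++ take t P) (nth x0 P t).
Proof. by move=> Ht; rewrite (rot_nth x0 Ht) (take_nth x0 (ltnW Ht)) rcons_cat. Qed.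
Lemma rot_last (p0 : X) P' :
  rot (size P') (p0 :: P') = last p0 P' :: take (size P') (p0 :: P').
Proof.
rewrite (rot_nth p0) //= drop_oversize ?leqnn //.
by rewrite -last_nth.
Qed.
End RotLemmas.


Section Gal.
Variables (F : fieldType) (E : splittingFieldType F) (d : nat) (u : d.-tuple E).
Hypothesis HEgal : galois 1%VS {:E}.
Hypothesis Hbasis : basis_of {:E} u.
Hypothesis Heig : forall (s : gal_of {:E}), s \in ('Gal({:E} / 1%VS))%g ->
            forall j : 'I_d, exists c : F, s (tnth u j) = c%:A * tnth u j.

Let om j := tnth u j.

Lemma u_free : free u. Proof. exact: basis_free Hbasis. Qed.

Lemma om_neq0 j : om j != 0.
Proof. apply: (free_not0 u_free); exact: mem_tnth. Qed.

Lemma coord_om j l : coord u l (om j) = (j == l)%:R.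
Proof. by rewrite /om (tnth_nth 0) coord_free // u_free. Qed.

Lemma om_expand y : y = \sum_i coord u i y *: om i.
Proof.
rewrite {1}(coord_basis Hbasis (memvf y)); apply: eq_bigr => i _.
by rewrite /om (tnth_nth 0).
Qed.

Lemma coord_eig (s : gal_of {:E}) l (c : F) :
  s (om l) = c%:A * om l -> forall l', coord u l' (s (om l)) = (l == l')%:R * c.
Proof.
move=> -> l0; rewrite mulr_algl linearZ /= coord_om.
by rewrite mulrC.
Qed.

Lemma eig_coord (s : gal_of {:E}) (Hs : s \in ('Gal({:E} / 1%VS))%g) y (mu : F) l :
  s y = mu%:A * y -> coord u l y != 0 -> s (om l) = mu%:A * om l.
Proof.
move=> Hy Hc.
have [lam Hlam] := Heig Hs l.
have E1 : coord u l (s y) = coord u l y * lam.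
  rewrite {1}(om_expand y) linear_sum linear_sum /= (bigD1 l) //= big1 ?addr0.
    by rewrite linearZ /= linearZ /= (coord_eig Hlam) eqxx mul1r.
  move=> i Hi; have [lam' Hlam'] := Heig Hs i.
  by rewrite linearZ /= linearZ /= (coord_eig Hlam') (negPf Hi) mul0r mulr0.
have E2 : coord u l (s y) = mu * coord u l y.
  by rewrite Hy mulr_algl linearZ.
have : lam = mu.
  apply: (mulfI Hc); by rewrite -E1 E2 mulrC.
by move=> <-.
Qed.

Lemma coord_sub (K : {subfield E}) y l :
  y \in K -> coord u l y != 0 -> om l \in K.
Proof.
move=> Hy Hc.
have HK : galois K {:E} by apply: (galoisS _ HEgal); rewrite sub1v subvf.
rewrite -(galois_fixedField HK); apply/fixedFieldP; first exact: memvf.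
move=> s Hs.
have Hs1 : s \in ('Gal({:E} / 1%VS))%g by apply: (subsetP (galS _ (sub1v K))).
have Hsy : s y = 1%:A * y by rewrite scale1r mul1r (fixed_gal (subvf K) Hs Hy).
by rewrite (eig_coord Hs1 Hsy Hc) scale1r mul1r.
Qed.

Lemma prod_line (K : {subfield E}) e i : om e \in K -> om i \in K ->
  exists2 j, om j \in K & om e * om i \in <[om j]>%VS.
Proof.
move=> HeK HiK.
set y := om e * om i.
have Hy0 : y != 0 by rewrite mulf_neq0 ?om_neq0.
have HyK : y \in K by rewrite rpredM.
have [l Hl] : exists l, coord u l y != 0.
  case: (pickP (fun l => coord u l y != 0)) => [l Hl|H]; first by exists l.
  exfalso; move/negP: Hy0; apply; apply/eqP.
  rewrite (om_expand y) big1 // => j _; by move/negbFE/eqP: (H j) => ->; rewrite scale0r.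
have Hoth : forall l', l' != l -> coord u l' y = 0.
  move=> l' Hl'; case: (eqVneq (coord u l' y) 0) => // Hc; exfalso.
  have Hfix : forall s, s \in ('Gal({:E} / 1%VS))%g -> s (om l / om l') = om l / om l'.
    move=> s Hs; have [le Hle] := Heig Hs e; have [li Hli] := Heig Hs i.
    have Hsy : s y = (le * li)%:A * y.
      rewrite /y rmorphM /= -/(om e) -/(om i) Hle Hli.
      by rewrite mulrACA -[(le * li)%:A]/(in_alg E (le * li)) rmorphM.
    have H1 := eig_coord Hs Hsy Hl; have H2 := eig_coord Hs Hsy Hc.
    set x := om l / om l'.
    have Hx : om l = x * om l' by rewrite /x divfK ?om_neq0.
    have Hs' : s (om l') != 0.
      by rewrite fmorph_eq0 om_neq0.
    apply: (mulIf Hs'); rewrite -rmorphM /= -Hx H1 H2 Hx; by rewrite mulrCA.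
  have : om l / om l' \in 1%VS.
    rewrite -(galois_fixedField HEgal); apply/fixedFieldP; [exact: memvf | exact: Hfix].
  case/vlineP => c Hcx.
  have : om l = c *: om l' by rewrite -[om l](divfK (om_neq0 l')) Hcx -scalerAl mul1r.
  move/(congr1 (coord u l)); rewrite coord_om eqxx linearZ /= coord_om (negPf Hl') mulr0.
  by move/eqP; rewrite oner_eq0.
exists l; first exact: coord_sub HyK Hl.
apply/vlineP; exists (coord u l y).
rewrite {1}(om_expand y) (bigD1 l) //= big1 ?addr0 // => l' Hl'.
by rewrite Hoth // scale0r.
Qed.
End Gal.

Section Main.
Variables (F : fieldType) (E : splittingFieldType F).
Variables (Q0 Q1 : finType) (tl hd : Q1 -> Q0).
Variables (d : nat) (u : d.-tuple E) (Fv : Q0 -> {subfield E}).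
Variables (M : Q0 -> vectType F) (act : forall i, E -> 'End(M i))
          (am : forall a : Q1, 'Hom(M (tl a), M (hd a))).
Variables (S : seq (arr Q1 d) -> F) (N : nat) (k : Q0).
Hypothesis Hbasis : basis_of {:E} u.
Hypothesis HSP : is_SP tl hd u Fv S.
Hypothesis HSk : forall (P : seq (arr Q1 d)) c j rest, S P != 0 -> P = (c, j) :: rest -> hd c != k.
Hypothesis Hjac : jacobian tl hd u act am S N.
Hypothesis HM : is_Fmodule Fv act.
Hypothesis HEgal : galois 1%VS {:E}.
Hypothesis Heig : forall (s : gal_of {:E}), s \in ('Gal({:E} / 1%VS))%g ->
            forall j : 'I_d, exists c : F, s (tnth u j) = c%:A * tnth u j.

Let om j := tnth u j.
Let D b j a := @dact2 _ _ _ _ tl hd _ u M act am S N b j a.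
Let tens' (V : lmodType F) y (m : V) := @tens _ _ _ u V y m.

Lemma om_expand' y : y = \sum_i coord u i y *: om i.
Proof.
rewrite {1}(coord_basis Hbasis (memvf y)); apply: eq_bigr => i _.
by rewrite /om (tnth_nth 0).
Qed.

Lemma tscale_lin (V : lmodType F) x : linear (@tscale _ _ _ u V x).
Proof.
move=> a T T'; rewrite /tscale scaler_sumr -big_split; apply: eq_bigr => j _ /=.
by rewrite !ffunE (tens_linm u).
Qed.

Lemma tens_liny0 (V : lmodType F) (m : V) : linear (fun y => @tens _ _ _ u V y m).
Proof.
by move=> a x y; apply/ffunP => l; rewrite !ffunE linearP /= scalerDl scalerA.
Qed.

Lemma tscale_tens (V : lmodType F) x y (m : V) : tscale u x (tens u y m) = tens u (x * y) m.
Proof.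
rewrite /tscale (eq_bigr (fun j => tens u (coord u j y *: (x * om j)) m)); last first.
  by move=> j _; rewrite ffunE (linZ (tens_linm u _)) -(linZ (tens_liny0 m)).
rewrite -(linS (tens_liny0 m)); congr tens.
rewrite {2}(om_expand' y) mulr_sumr; apply: eq_bigr => j _; by rewrite scalerAr.
Qed.
Let Dlin b j a := @dact2_lin _ _ _ _ tl hd _ u M act am S N b j a.

Lemma gammaD T T' a : gamma tl hd u Fv act am S N k (fun b => T b + T' b) a
  = gamma tl hd u Fv act am S N k T a + gamma tl hd u Fv act am S N k T' a.
Proof.
rewrite /gamma -big_split; apply: eq_bigr => b _; rewrite -big_split.
apply: eq_bigr => l _; rewrite -big_split; apply: eq_bigr => j _ /=.
by rewrite ffunE (linD (Dlin _ _)) (linD (tens_linm u _)).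
Qed.

Lemma gammaZ x T a : gamma tl hd u Fv act am S N k (fun b => tscale u x (T b)) a
  = tscale u x (gamma tl hd u Fv act am S N k T a).
Proof.
rewrite /gamma (linS (@tscale_lin _ x)); apply: eq_bigr => b _.
rewrite (linS (@tscale_lin _ x)).
under [RHS]eq_bigr => l _ do rewrite (linS (@tscale_lin _ x)).
under [RHS]eq_bigr => l _ do under eq_bigr => j _ do rewrite tscale_tens.
rewrite exchange_big [RHS]exchange_big; apply: eq_bigr => j _.
under eq_bigr => l _ do rewrite /tscale sum_ffunE (linS (Dlin _ _)) (linS (tens_linm u _)).
rewrite exchange_big; apply: eq_bigr => j' _ /=.
under eq_bigr => l _ do rewrite ffunE (linZ (Dlin _ _)) (linZ (tens_linm u _)) -(linZ (tens_liny u _ _)).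
rewrite -(linS (tens_liny u _ _)) -om_expand' mulrA //.
Qed.
Lemma vseq_om v p x0 t : vseq tl hd u Fv v p -> (t < size p)%N ->
  om (nth x0 p t).2 \in Fv (tl (nth x0 p t).1).
Proof.
elim: p t => [|[c j] p IH] t //= /and3P[H1 H2 H3].
by case: t => [|t] //= Ht; apply: IH.
Qed.

Lemma vseq_hd v p x0 t : vseq tl hd u Fv v p -> (t.+1 < size p)%N ->
  hd (nth x0 p t.+1).1 = tl (nth x0 p t).1.
Proof.
elim: p t => [|[c j] p IH] t //= /and3P[H1 /eqP H2 H3].
case: t => [|t] /= Ht; last by apply: IH.
by case: p IH H2 H3 Ht => [|[c' j'] p] //=.
Qed.

Lemma vseq_last v p x0 : vseq tl hd u Fv v p -> (0 < size p)%N ->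
  tl (nth x0 p (size p).-1).1 = v.
Proof.
elim: p => [|[c j] p IH] //= /and3P[H1 /eqP H2 H3] _.
by case: p IH H2 H3 => [|[c' j'] p] //= IH H2 H3; apply: IH.
Qed.
Lemma sum_deriv1 (V : zmodType) a P (G : 'I_d * seq (arr Q1 d) -> V) :
  \sum_(q <- deriv1 a P) G q = \sum_(0 <= t < size P)
     (if rot t P is (c, j) :: rest then (if c == a then G (j, rest) else 0) else 0).
Proof.
rewrite /deriv1 big_flatten big_map /index_iota subn0; apply: eq_bigr => t _.
case: (rot t P) => [|[c j] rest] /=; first by rewrite big_nil.
by case: (c == a); rewrite ?big_seq1 ?big_nil.
Qed.

Lemma sum_deriv2 (V : zmodType) b j0 a P (G : 'I_d * seq (arr Q1 d) -> V) :
  \sum_(q <- deriv2 b j0 a P) G q = \sum_(0 <= t < size P)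
     (if rot t P is (c1, j1) :: (c2, j2) :: rest then
        (if [&& c1 == b, j1 == j0 & c2 == a] then G (j2, rest) else 0) else 0).
Proof.
rewrite /deriv2 big_flatten big_map /index_iota subn0; apply: eq_bigr => t _.
case: (rot t P) => [|[c1 j1] [|[c2 j2] rest]] /=; rewrite ?big_nil //.
by case: ifP; rewrite ?big_seq1 ?big_nil.
Qed.

Lemma IDa P a x w : cyc_valid tl hd u Fv P ->
  (forall c j rest, P = (c, j) :: rest -> hd c != hd a) ->
  \sum_(q <- deriv1 a P) pop u act am q.1 q.2 x w =
  \sum_(b | tl b == hd a) \sum_(j | om j \in Fv (hd a))
     \sum_(q <- deriv2 b j a P) pop u act am q.1 q.2 (aop am b (wmul u act j x)) w.
Proof.
case: P => [|[c0 j0] P'] // Hcv Hh.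
have Hvs : vseq tl hd u Fv (hd c0) ((c0, j0) :: P') by [].
have Hc0 : c0 != a by apply: contraNneq (Hh c0 j0 P' erefl) => ->.
rewrite sum_deriv1.
under [RHS]eq_bigr => b _ do under eq_bigr => j _ do rewrite sum_deriv2.
under [RHS]eq_bigr => b _ do rewrite exchange_big.
rewrite [RHS]exchange_big /= big_nat_recl // rot0 /= (negPf Hc0) add0r big_nat_recr //=.
rewrite [X in _ = _ + X]big1 ?addr0; last first.
  move=> b _; apply: big1 => j _.
  rewrite (rot_last (c0, j0) P').
  case: P' {Hcv Hh Hvs} => [|p1 P''] //=.
  by rewrite (negPf Hc0); case: (last p1 P'') => c1 j1; rewrite !andbF.
apply: eq_big_nat => t /andP[_ Ht].
have Ht1 : (t.+1 < size ((c0, j0) :: P'))%N by [].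
rewrite (rot_succ (c0, j0) Ht1) (rot_nth2 (c0, j0) Ht1).
have Hom := vseq_om (c0, j0) Hvs (ltnW Ht1).
have Hhd := vseq_hd (c0, j0) Hvs Ht1.
move: Hom Hhd.
case: (nth (c0, j0) ((c0, j0) :: P') t) => c1 j1.
case: (nth (c0, j0) ((c0, j0) :: P') t.+1) => c2 j2 /= Hom Hhd.
case: (eqVneq c2 a) => [Ea|Na]; last first.
  by rewrite big1 // => b _; rewrite big1 // => j _; rewrite !andbF.
subst c2; rewrite pop_rcons.
have Hb : tl c1 == hd a by rewrite Hhd.
have Hj : om j1 \in Fv (hd a) by rewrite Hhd.
rewrite (bigD1 c1) //= (bigD1 j1) //= !eqxx /= big1 ?addr0; last first.
  by move=> j /andP[_ /negPf Hj']; rewrite andbT eq_sym Hj'.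
rewrite big1 ?addr0 // => b /andP[_ /negPf Hb']; apply: big1 => j _.
by rewrite eq_sym Hb'.
Qed.
Lemma trL v w : linear (@tr _ _ M v w). Proof. exact: tr_lin. Qed.

Lemma IDb P b x w : cyc_valid tl hd u Fv P ->
  (forall c j rest, P = (c, j) :: rest -> hd c != tl b) ->
  \sum_(q <- deriv1 b P) pop u act am q.1 q.2 x w =
  \sum_(a | hd a == tl b) \sum_(j | om j \in Fv (tl b))
     act w (om j) (tr w (am a (\sum_(q <- deriv2 b j a P) pop u act am q.1 q.2 x (tl a)))).
Proof.
case: P => [|[c0 j0] P'] // Hcv Hh.
have Hvs : vseq tl hd u Fv (hd c0) ((c0, j0) :: P') by [].
have Hc0 := Hh c0 j0 P' erefl.
rewrite sum_deriv1.
under [RHS]eq_bigr => a _ do under eq_bigr => j _ do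
  rewrite sum_deriv2 linear_sum (linS (@trL _ _)) linear_sum.
under [RHS]eq_bigr => a _ do rewrite exchange_big.
rewrite [RHS]exchange_big /=.
apply: eq_big_nat => t /andP[_ Ht].
case: (ltnP t.+1 (size ((c0, j0) :: P'))) => Ht1.
  rewrite (rot_nth2 (c0, j0) Ht1).
  have Hom := vseq_om (c0, j0) Hvs (ltnW Ht1).
  have Hhd := vseq_hd (c0, j0) Hvs Ht1.
  move: Hom Hhd.
  case: (nth (c0, j0) ((c0, j0) :: P') t) => c1 j1.
  case: (nth (c0, j0) ((c0, j0) :: P') t.+1) => c2 j2 /= Hom Hhd.
  case: (eqVneq c1 b) => [Eb|Nb]; last first.
    rewrite big1 // => a _; rewrite big1 // => j _.
    by rewrite /= linear0 (lin0 (@trL _ _)) linear0.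
  subst c1.
  have Ha : hd c2 == tl b by rewrite Hhd.
  rewrite (bigD1 c2) //= (bigD1 j1) //= !eqxx /= big1 ?addr0; last first.
    move=> j /andP[_ /negPf Hj']; rewrite eq_sym Hj' /=.
    by rewrite linear0 (lin0 (@trL _ _)) linear0.
  rewrite big1 ?addr0 // => a /andP[_ /negPf Ha']; apply: big1 => j _.
  by rewrite [c2 == a]eq_sym Ha' !andbF linear0 (lin0 (@trL _ _)) linear0.
have Et : t = size P' by apply/eqP; rewrite eqn_leq -ltnS Ht -ltnS Ht1.
subst t; rewrite (rot_last (c0, j0) P').
have Hl := vseq_last (c0, j0) Hvs erefl.
rewrite /= -/(last (c0, j0) ((c0, j0) :: P')) nth_last /= in Hl.
move: Hl; case: (last (c0, j0) P') => cl jl /= Hl.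
have Hcl : (cl == b) = false.
  by apply/negbTE; apply: contra Hc0 => /eqP <-; rewrite Hl.
rewrite Hcl big1 // => a _; apply: big1 => j _.
case: (take _ _) => [|[c2 j2] r] /=; rewrite ?Hcl /= ?linear0 ?(lin0 (@trL _ _)) ?linear0 //.
Qed.
Lemma inj_aop b z i : inj (aop am b z (hd b)) i = aop am b z i.
Proof. by rewrite injE !aopE trvv. Qed.

Lemma JacA a (Ha : hd a = k) (n : M (hd a)) :
  \sum_(b | tl b == hd a) \sum_(j | om j \in Fv (hd a))
     D j a (aop am b (inj (act (hd a) (om j) n)) (hd b)) = 0.
Proof.
rewrite -[RHS](Hjac n) /dact /D /dact2 /sact.
under eq_bigr => b _ do rewrite exchange_big.
rewrite exchange_big; apply: eq_bigr => n' _.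
under eq_bigr => b _ do rewrite exchange_big.
rewrite exchange_big; apply: eq_bigr => P _.
under eq_bigr => b _ do rewrite -scaler_sumr.
rewrite -scaler_sumr.
case: (eqVneq (S P) 0) => [->|HP]; first by rewrite !scale0r.
congr (_ *: _); rewrite /pact (IDa _ _ (HSP.1 _ HP)); last first.
  by move=> c j rest EP; rewrite Ha; apply: HSk EP.
apply: eq_bigr => b _; apply: eq_bigr => j _; apply: eq_bigr => q _.
apply: pop_ext => i; rewrite inj_aop !aopE; congr (tr i (am b _)).
by rewrite wmulE !injE tr_act.
Qed.

Lemma JacB b (Hb : tl b = k) (n : M (hd b)) :
  \sum_(a | hd a == tl b) \sum_(j | om j \in Fv (tl b))
     act (tl b) (om j) (tr (tl b) (am a (D j a n))) = 0.
Proof.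
rewrite -[RHS](Hjac n) /dact /D /dact2 /sact.
under eq_bigr => a _ do under eq_bigr => j _ do
  rewrite linear_sum (linS (@trL _ _)) linear_sum.
under eq_bigr => a _ do under eq_bigr => j _ do under eq_bigr => n' _ do
  rewrite linear_sum (linS (@trL _ _)) linear_sum.
under eq_bigr => a _ do rewrite exchange_big.
rewrite exchange_big; apply: eq_bigr => n' _.
under eq_bigr => a _ do rewrite exchange_big.
rewrite exchange_big; apply: eq_bigr => P _.
under eq_bigr => a _ do under eq_bigr => j _ do
  rewrite linearZ (linZ (@trL _ _)) linearZ.
under eq_bigr => a _ do rewrite -scaler_sumr.
rewrite -scaler_sumr.
case: (eqVneq (S P) 0) => [->|HP]; first by rewrite !scale0r.
congr (_ *: _); rewrite /pact (IDb _ _ (HSP.1 _ HP)) //.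
by move=> c j rest EP; rewrite Hb; apply: HSk EP.
Qed.
Lemma act_mul i y z m : y \in Fv i -> z \in Fv i -> act i (y * z) m = act i y (act i z m).
Proof. by move=> Hy Hz; have [_ [_ [_ H]]] := HM i; rewrite H // comp_lfunE. Qed.

Lemma act_alg i c m : act i (c%:A) m = c *: m.
Proof. by have [_ [H _]] := HM i; rewrite H lfunE /= id_lfunE. Qed.

Lemma act_add i y z m : y \in Fv i -> z \in Fv i -> act i (y + z) m = act i y m + act i z m.
Proof. by move=> Hy Hz; have [_ [_ [H _]]] := HM i; rewrite H // add_lfunE. Qed.

Lemma act0 i m : act i 0 m = 0.
Proof. by rewrite -(scale0r 1) act_alg scale0r. Qed.

Lemma act_sum i (P : pred 'I_d) (f : 'I_d -> E) m : (forall l, P l -> f l \in Fv i) ->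
  act i (\sum_(l | P l) f l) m = \sum_(l | P l) act i (f l) m.
Proof.
move=> Hf.
pose R y z := (y \in Fv i) /\ act i y m = z.
have : R (\sum_(l | P l) f l) (\sum_(l | P l) act i (f l) m).
  apply: (big_ind2 R); first by split; [exact: rpred0 | exact: act0].
    by move=> y1 z1 y2 z2 [H1 E1] [H2 E2]; split; [exact: rpredD | rewrite act_add // E1 E2].
  by move=> l Pl; split; [exact: Hf|].
by case.
Qed.

Lemma act_scal i c y m : y \in Fv i -> act i (c *: y) m = c *: act i y m.
Proof.
move=> Hy; rewrite -mulr_algl act_mul // ?act_alg //.
by rewrite rpredZ // mem1v.
Qed.

Lemma actE i y m : y \in Fv i -> act i y m = \sum_l coord u l y *: act i (om l) m.
Proof.
move=> Hy.
rewrite (bigID (fun l => om l \in Fv i)) /= [X in _ = _ + X]big1 ?addr0; last first.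
  move=> l Hl; case: (eqVneq (coord u l y) 0) => [->|Hc]; first by rewrite scale0r.
  by rewrite (coord_sub HEgal Hbasis Heig Hy Hc) in Hl.
rewrite {1}(om_expand' y) (bigID (fun l => om l \in Fv i)) /= [X in act _ (_ + X)]big1 ?addr0.
  rewrite act_sum; first by apply: eq_bigr => l Hl; rewrite act_scal.
  by move=> l Hl; rewrite rpredZ.
move=> l Hl; case: (eqVneq (coord u l y) 0) => [->|Hc]; first by rewrite scale0r.
by rewrite (coord_sub HEgal Hbasis Heig Hy Hc) in Hl.
Qed.
Lemma gammaE T a l : (gamma tl hd u Fv act am S N k T a) l =
  \sum_(b | tl b == k) \sum_l' \sum_(j | om j \in Fv k) coord u l (om l' * om j) *: D j a (T b l').
Proof.
rewrite /gamma sum_ffunE; apply: eq_bigr => b _; rewrite sum_ffunE; apply: eq_bigr => l' _.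
by rewrite sum_ffunE; apply: eq_bigr => j _; rewrite ffunE.
Qed.

Lemma alpha_gamma T : in_Mout tl hd u Fv k T ->
  alpha tl hd u act am k (gamma tl hd u Fv act am S N k T) = 0.
Proof.
move=> HT; rewrite /alpha.
have H : forall a l, act k (om l) (aop am a (inj (gamma tl hd u Fv act am S N k T a l)) k) =
  \sum_(b | tl b == k) \sum_l' \sum_(j | om j \in Fv k)
    coord u l (om l' * om j) *: act k (om l) (tr k (am a (D j a (T b l')))).
  move=> a l; rewrite aopE injE trvv gammaE !linear_sum; apply: eq_bigr => b _.
  rewrite !linear_sum; apply: eq_bigr => l' _.
  by rewrite !linear_sum; apply: eq_bigr => j _; rewrite !linearZ.
under eq_bigr => a _ do under eq_bigr => l _ do rewrite H.
under eq_bigr => a _ do rewrite exchange_big.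
rewrite exchange_big big1 // => b /eqP Hb.
under eq_bigr => a _ do rewrite exchange_big.
rewrite exchange_big big1 // => l' _.
case: (boolP (om l' \in Fv k)) => Hl'; last first.
  rewrite big1 // => a _; rewrite big1 // => l _; rewrite big1 // => j _.
  have -> : T b l' = 0 by apply: (HT b Hb).
  by rewrite /D (lin0 (Dlin _ _)) !linear0. 
under eq_bigr => a _ do rewrite exchange_big.
under eq_bigr => a _ do under eq_bigr => j Hj do rewrite -actE ?rpredM // act_mul //.
under eq_bigr => a _ do rewrite -linear_sum.
rewrite -linear_sum.
move: Hl'; rewrite -Hb => Hl'.
by rewrite JacB // linear0.
Qed.

Lemma casimir (V : lmodType F) v j (Z : M v -> V) (HZ : linear Z) m :
  om j \in Fv v ->
  \sum_(j' | om j' \in Fv v) tens u ((om j')^-1 * om j) (Z (act v (om j') m)) =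
  \sum_(i | om i \in Fv v) tens u ((om i)^-1) (Z (act v (om j) (act v (om i) m))).
Proof.
move=> Hj.
pose pi i := if om i \in Fv v then
   odflt i [pick j' | (om j' \in Fv v) && (om j * om i \in <[om j']>%VS)] else i.
have Hpi : forall i, om i \in Fv v ->
    om (pi i) \in Fv v /\ exists2 c, c != 0 & om j * om i = c%:A * om (pi i).
  move=> i Hi; rewrite /pi Hi.
  case: pickP => [j' /andP[Hj' /vlineP[c Hc]] | H] /=; last first.
    have [j' Hj' Hl] := prod_line HEgal Hbasis Heig Hj Hi.
    by move: (H j'); rewrite Hj' Hl.
  split => //; exists c; last by rewrite mulr_algl.
  apply/eqP => c0; move: Hc; rewrite c0 scale0r; apply/eqP.
  by rewrite mulf_neq0 // (om_neq0 Hbasis).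
have HpiB : forall i, (om (pi i) \in Fv v) = (om i \in Fv v).
  move=> i; case: (boolP (om i \in Fv v)) => Hi; first by case: (Hpi i Hi).
  by rewrite /pi (negPf Hi) (negPf Hi).
have Hinj : injective pi.
  move=> i i' Epi.
  case: (boolP (om i \in Fv v)) => Hi; case: (boolP (om i' \in Fv v)) => Hi'.
  - have [_ [c Hc Ei]] := Hpi i Hi; have [_ [c' Hc' Ei']] := Hpi i' Hi'.
    rewrite -Epi in Ei'.
    have : c'%:A * om i = c%:A * om i' :> E.
      apply: (mulfI (om_neq0 Hbasis j)).
      by rewrite [LHS]mulrCA Ei [RHS]mulrCA Ei' mulrCA.
    rewrite !mulr_algl => /(congr1 (coord u i)).
    rewrite !linearZ /= !(coord_om Hbasis) eqxx mulr1.
    case: (eqVneq i' i) => // _; rewrite mulr0 => /eqP; by rewrite (negPf Hc').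
  - by move: Hi'; rewrite -HpiB -Epi HpiB Hi.
  - by move: Hi; rewrite -HpiB Epi HpiB Hi'.
  - by move: Epi; rewrite /pi (negPf Hi) (negPf Hi').
rewrite (reindex_inj Hinj) /=; apply: eq_big => i; first by rewrite HpiB.
move=> Hi; rewrite HpiB in Hi; have [_ [c Hc Ei]] := Hpi i Hi.
rewrite -act_mul // ?rpredM // Ei mulr_algl act_scal; last by case: (Hpi i Hi).
rewrite (linZ HZ) (linZ (tens_linm u _)) -(linZ (tens_liny0 _)).
congr tens.
have Hnz := om_neq0 Hbasis.
have -> : om j = c%:A * om (pi i) / om i by rewrite -Ei mulfK.
rewrite mulr_algl -scalerAl -scalerAr; congr (_ *: _).
by rewrite mulrA mulVf ?mul1r.
Qed.
Lemma Zlin v b j a : linear (fun n : M v => D j a (aop am b (inj n) (hd b))).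
Proof. by move=> c x y /=; rewrite !aopE !injE !linearP; apply: Dlin. Qed.

Lemma gamma_beta m a : hd a = k ->
  gamma tl hd u Fv act am S N k (beta tl hd u Fv act am k m) a = 0.
Proof.
move=> Ha; move: m; rewrite -Ha => m.
rewrite /gamma.
have Hbeta : forall b l, (beta tl hd u Fv act am (hd a) m b) l =
    \sum_(j' | om j' \in Fv (hd a)) coord u l (om j')^-1 *:
        aop am b (inj (act (hd a) (om j') m)) (hd b).
  by move=> b l; rewrite /beta sum_ffunE; apply: eq_bigr => j' _; rewrite ffunE.
under eq_bigr => b _ do under eq_bigr => l _ do under eq_bigr => j _ do
  rewrite Hbeta (linS (Dlin _ _)) (linS (tens_linm u _)).
under eq_bigr => b _ do rewrite exchange_big.
under eq_bigr => b _ do under eq_bigr => j _ do rewrite exchange_big.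
under eq_bigr => b _ do under eq_bigr => j _ do under eq_bigr => j' _ do
  under eq_bigr => l _ do rewrite (linZ (Dlin _ _)) (linZ (tens_linm u _)) -(linZ (tens_liny u _ _)).
under eq_bigr => b _ do under eq_bigr => j _ do under eq_bigr => j' _ do
  rewrite -(linS (tens_liny u _ _)) -om_expand'.
under eq_bigr => b _ do under eq_bigr => j Hj do
  rewrite (casimir (@Zlin (hd a) b j a) m Hj).
under eq_bigr => b _ do rewrite exchange_big.
rewrite exchange_big big1 // => i _.
under eq_bigr => b _ do rewrite -(linS (tens_linm u _)).
by rewrite -(linS (tens_linm u _)) (JacA Ha) (lin0 (tens_linm u _)).
Qed.
End Main.

Unset Implicit Arguments.
Set Strict Implicit.

Theorem mainTheorem17
  (* weighted quiver (Q, wt) *)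
  (Q0 Q1 : finType) (tl hd : Q1 -> Q0) (wt : Q0 -> nat)
  (Hwt : forall i, (0 < wt i)%N)
  (d : nat) (Hd : d = \big[lcmn/1%N]_(i : Q0) wt i)
  (* the field F with a primitive d-th root of unity, E/F cyclic Galois of degree d *)
  (F : fieldType) (zeta : F) (Hzeta : d.-primitive_root zeta)
  (E : splittingFieldType F)
  (HEgal : galois 1%VS {:E}) (HEcyc : cyclic ('Gal({:E} / 1%VS))%g) (HEdim : \dim {:E} = d)
  (* the degree-wt i subextensions F_i *)
  (Fv : Q0 -> {subfield E}) (HFv : forall i, \dim (Fv i) = wt i)
  (* a fixed eigenbasis u of E/F *)
  (u : d.-tuple E) (Hbasis : basis_of {:E} u)
  (Heig : forall (s : gal_of {:E}), s \in ('Gal({:E} / 1%VS))%g ->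
            forall j : 'I_d, exists c : F, s (tnth u j) = c%:A * tnth u j)
  (* the potential S *)
  (S : seq (arr Q1 d) -> F) (HSP : is_SP tl hd u Fv S)
  (* the vertex k *)
  (k : Q0) (Hk1 : 1 \in Bv u Fv k)
  (Hno2 : ~ exists a b : Q1, [/\ tl a = k, hd a = tl b & hd b = k])
  (HSk : forall (P : seq (arr Q1 d)) c j rest, S P != 0 -> P = (c, j) :: rest -> hd c != k)
  (* the representation M *)
  (M : Q0 -> vectType F) (act : forall i, E -> 'End(M i))
  (am : forall a : Q1, 'Hom(M (tl a), M (hd a))) (N : nat)
  (HM : is_Fmodule Fv act) (Hnil : nilpotent tl hd u Fv act am N)
  (Hjac : jacobian tl hd u act am S N) :
  (* gamma is F_k-linear *)
  (forall T T', in_Mout tl hd u Fv k T -> in_Mout tl hd u Fv k T' -> forall a, hd a = k ->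
      gamma tl hd u Fv act am S N k (fun b => T b + T' b) a
      = gamma tl hd u Fv act am S N k T a + gamma tl hd u Fv act am S N k T' a) /\
  (forall (x : E) T, x \in Fv k -> in_Mout tl hd u Fv k T -> forall a, hd a = k ->
      gamma tl hd u Fv act am S N k (fun b => tscale u x (T b)) a
      = tscale u x (gamma tl hd u Fv act am S N k T a)) /\
  (* gamma beta = 0 *)
  (forall (m : M k) a, hd a = k ->
      gamma tl hd u Fv act am S N k (beta tl hd u Fv act am k m) a = 0) /\
  (* alpha gamma = 0 *)
  (forall T, in_Mout tl hd u Fv k T ->
      alpha tl hd u act am k (gamma tl hd u Fv act am S N k T) = 0).
Proof.
split; [|split; [|split]].
- by move=> T T' _ _ a _; apply: gammaD.
- by move=> x T _ _ a _; apply: gammaZ.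
- by move=> m a Ha; apply: (gamma_beta Hbasis HSP HSk Hjac HM HEgal Heig).
- by move=> T HT; apply: (alpha_gamma Hbasis HSP HSk Hjac HM HEgal Heig).
Qed.
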